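(* Let $\lambda$ be a nonzero real number. For any integer $p\ge2$, \[ \sum_{k=1}^{\infty}\frac{(-1)^{k-1}\lambda^{k-1}(1)_{k,1/\lambda}}{(k-1)!\,k^{p}(k+1)}=\sum_{k=1}^{p-1}(-1)^{k-1}\zeta_{\lambda}(p-k+1)+\frac{(-1)^{p-1}}{\lambda+1}. \]
   Context: For real $x$ and $\mu\neq 0$, set $(x)_{0,\mu}=1$ and $(x)_{n,\mu}=x(x-\mu)\cdots(x-(n-1)\mu)$ for $n\ge1$; thus $(1)_{k,1/\lambda}=1\cdot(1-\tfrac1\lambda)\cdots(1-\tfrac{k-1}{\lambda})$. The degenerate zeta function is $\zeta_{\lambda}(s)=\sum_{n=1}^{\infty}\frac{(-1)^{n-1}\lambda^{n-1}(1)_{n,1/\lambda}}{(n-1)!\,n^{s}}$ for $\mathrm{Re}(s)>1$. *)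

(* Defs.v *)
From Stdlib Require Import Reals.
From Coquelicot Require Export Coquelicot.
Open Scope R_scope.

Fixpoint dfall (x mu : R) (n : nat) : R :=
  match n with
  | O => 1
  | S m => dfall x mu m * (x - INR m * mu)
  end.

(** Coefficient  (-1)^{n-1} lambda^{n-1} (1)_{n,1/lambda} / (n-1)!  (used for n >= 1). *)
Definition dcoef (lam : R) (n : nat) : R :=
  (-1) ^ (n - 1) * lam ^ (n - 1) * dfall 1 (1 / lam) n / INR (Factorial.fact (n - 1)).

(** Terms of the degenerate zeta series at an integer argument s:
    the m-th term (m >= 0) is the term with index n = m+1. *)
Definition dzeta_term (lam : R) (s : nat) (m : nat) : R :=
  dcoef lam (S m) / INR (S m) ^ s.

Definition dzeta (lam : R) (s : nat) : R := Series (dzeta_term lam s).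

(* Main.v *)
Require Import Defs.
From Stdlib Require Import Reals Lra Lia.
From Coquelicot Require Import Coquelicot.
Open Scope R_scope.

Definition A lam m := dcoef lam (S m).
Definition u lam m := A lam m / INR (S m).

Lemma A0 lam : A lam 0 = 1.
Proof. unfold A, dcoef; simpl. rewrite Rmult_0_l, Rminus_0_r. unfold Rdiv. rewrite Rinv_1. ring. Qed.

Lemma A_S lam m : lam <> 0 -> A lam (S m) = A lam m * (INR (S m) - lam) / INR (S m).
Proof.
  intros H. unfold A, dcoef.
  replace (S (S m) - 1)%nat with (S m) by lia. replace (S m - 1)%nat with m by lia.
  change (dfall 1 (1/lam) (S (S m))) with (dfall 1 (1/lam) (S m) * (1 - INR (S m) * (1/lam))).
  rewrite fact_simpl, mult_INR.
  assert (INR (S m) <> 0) by (apply not_0_INR; lia).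
  assert (INR (Factorial.fact m) <> 0) by apply INR_fact_neq_0.
  simpl pow. field. auto.
Qed.

Lemma u_S lam m : lam <> 0 -> u lam (S m) = u lam m * (INR (S m) - lam) / INR (S (S m)).
Proof.
  intros H. unfold u. rewrite A_S by auto.
  assert (INR (S m) <> 0) by (apply not_0_INR; lia).
  assert (INR (S (S m)) <> 0) by (apply not_0_INR; lia).
  field. auto.
Qed.

Lemma sum_opp (f : nat -> R) n m : sum_n_m (fun k => - f k) n m = - sum_n_m f n m.
Proof.
  rewrite <- (Rmult_1_l (sum_n_m f n m)), Ropp_mult_distr_l.
  rewrite <- (sum_n_m_mult_l (-1) f). apply sum_n_m_ext. intros. unfold mult; simpl. ring.
Qed.

Lemma sum_le_loc (a b : nat -> R) n m :
  (forall k, (n <= k <= m)%nat -> a k <= b k) -> sum_n_m a n m <= sum_n_m b n m.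
Proof.
  intros H. rewrite (sum_n_m_ext_loc a (fun k => Rmin (a k) (b k))).
  - apply sum_n_m_le. intros; apply Rmin_r.
  - intros k Hk. rewrite Rmin_left; auto.
Qed.

Lemma lower (v : nat -> R) n c : 0 <= c -> (forall k, (n <= k <= 2*n)%nat -> c <= v k) ->
  c / 2 <= sum_n_m (fun k => v k / INR (S k)) n (2*n).
Proof.
  intros Hc H.
  apply Rle_trans with (sum_n_m (fun _ => c / INR (S (2*n))) n (2*n)).
  - rewrite sum_n_m_const. replace (S (2*n) - n)%nat with (S n) by lia.
    rewrite !S_INR, mult_INR. simpl (INR 2).
    assert (0 <= INR n) by apply pos_INR.
    replace (( INR n + 1) * (c / ((1 + 1) * INR n + 1))) with (c/2 + c / (2 * (2 * INR n + 1))) by (field; lra).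
    assert (0 <= c / (2 * (2 * INR n + 1))). { apply Rdiv_le_0_compat; lra. }
    lra.
  - apply sum_le_loc. intros k Hk. specialize (H k Hk).
    assert (0 < INR (S k)) by (apply lt_0_INR; lia).
    assert (INR (S k) <= INR (S (2*n))) by (apply le_INR; lia).
    unfold Rdiv. apply Rle_trans with (c * / INR (S k)).
    + apply Rmult_le_compat_l; auto. apply Rinv_le_contravar; auto.
    + apply Rmult_le_compat_r; auto. left; apply Rinv_0_lt_compat; auto.
Qed.

Lemma cauchy2 (a : nat -> R) : ex_series a ->
  forall eps, 0 < eps -> exists N, forall n, (N <= n)%nat -> Rabs (sum_n_m a n (2*n)) < eps.
Proof.
  intros H eps He. destruct (Cauchy_ex_series a H (mkposreal eps He)) as [N HN].
  exists N. intros n Hn. apply (HN n (2*n)%nat); lia.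
Qed.

Lemma key (v : nat -> R) (K : nat) :
  (forall eps, 0 < eps -> exists N, forall n, (N <= n)%nat ->
      Rabs (sum_n_m (fun k => v k / INR (S k)) n (2*n)) < eps) ->
  (forall j k, (K <= j <= k)%nat -> v k <= v j) ->
  (forall k, (K <= k)%nat -> 0 <= v k) -> is_lim_seq v 0.
Proof.
  intros HC Hmon Hpos. apply is_lim_seq_spec. intros eps.
  destruct (HC (eps/2)) as [N HN]. { destruct eps; simpl; lra. }
  exists (2 * (N + K))%nat. intros m Hm.
  set (n := (N + K)%nat).
  assert (H1 := HN n ltac:(lia)).
  assert (H2 : v (2*n)%nat / 2 <= sum_n_m (fun k => v k / INR (S k)) n (2*n)).
  { apply lower. apply Hpos; lia. intros k Hk. apply Hmon; lia. }
  assert (0 <= v (2*n)%nat) by (apply Hpos; lia).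
  assert (v m <= v (2*n)%nat) by (apply Hmon; lia).
  assert (0 <= v m) by (apply Hpos; lia).
  rewrite Rminus_0_r, Rabs_pos_eq by auto.
  apply Rle_abs in H1 ||  idtac.
  pose proof (Rle_abs (sum_n_m (fun k : nat => v k / INR (S k)) n (2 * n))).
  lra.
Qed.

Lemma u_lim lam : lam <> 0 -> ex_series (dzeta_term lam 2) -> -1 < lam /\ is_lim_seq (u lam) 0.
Proof.
  intros Hl Hex.
  assert (Hex' : ex_series (fun k => u lam k / INR (S k))).
  { apply ex_series_ext with (dzeta_term lam 2); auto. intros k. unfold dzeta_term, u, A.
    assert (INR (S k) <> 0) by (apply not_0_INR; lia). simpl. field; auto. }
  pose proof (cauchy2 _ Hex') as HC.
  assert (rpos : forall m, (INR m > lam) -> 0 <= (INR (S m) - lam) / INR (S (S m))).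
  { intros m Hm. rewrite S_INR. apply Rdiv_le_0_compat. lra. apply lt_0_INR; lia. }
  destruct (Rle_dec lam (-1)) as [Hle|Hgt].
  - exfalso.
    assert (Hge : forall m, 1 <= u lam m).
    { induction m.
      - unfold u. rewrite A0. simpl. lra.
      - rewrite u_S by auto. rewrite (S_INR (S m)).
        assert (0 <= INR m) by apply pos_INR. rewrite S_INR in *.
        apply (Rmult_le_reg_r (INR m + 1 + 1)). lra.
        unfold Rdiv. rewrite Rmult_assoc, Rinv_l by lra. nra. }
    destruct (HC (1/2)) as [N HN]. lra.
    specialize (HN N (le_n _)).
    pose proof (lower (u lam) N 1 ltac:(lra) (fun k _ => Hge k)).
    pose proof (Rle_abs (sum_n_m (fun k : nat => u lam k / INR (S k)) N (2 * N))). lra.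
  - split. lra.
    destruct (INR_archimed 1 lam) as [K HK]. lra. rewrite Rmult_1_r in HK.
    set (s := if Rle_dec 0 (u lam K) then 1 else -1).
    assert (Hs : s * s = 1) by (unfold s; destruct Rle_dec; ring).
    assert (HsK : 0 <= s * u lam K) by (unfold s; destruct Rle_dec; lra).
    set (v := fun m => s * u lam m).
    assert (HvS : forall m, v (S m) = v m * ((INR (S m) - lam) / INR (S (S m)))).
    { intros m. unfold v. rewrite u_S by auto. unfold Rdiv. ring. }
    assert (Hr : forall m, (K <= m)%nat -> 0 <= (INR (S m) - lam) / INR (S (S m)) <= 1).
    { intros m Hm. assert (INR K <= INR m) by (apply le_INR; auto). split. apply rpos; lra.
      rewrite (S_INR (S m)). assert (0 < INR (S m)) by (apply lt_0_INR; lia).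
      apply (Rmult_le_reg_r (INR (S m) + 1)). lra.
      unfold Rdiv. rewrite Rmult_assoc, Rinv_l by lra. lra. }
    assert (Hpos : forall j, 0 <= v (K + j)%nat).
    { induction j. rewrite Nat.add_0_r. exact HsK.
      rewrite Nat.add_succ_r, HvS. apply Rmult_le_pos; auto. apply Hr; lia. }
    assert (Hmon : forall j d, v (K + j + d)%nat <= v (K + j)%nat).
    { intros j d. induction d. rewrite Nat.add_0_r; lra.
      rewrite Nat.add_succ_r, HvS. specialize (Hr (K + j + d)%nat ltac:(lia)).
      specialize (Hpos (j + d)%nat). rewrite Nat.add_assoc in Hpos. nra. }
    assert (Hv : is_lim_seq v 0).
    { apply (key v K).
      - intros eps He. destruct (HC eps He) as [N HN]. exists N. intros n Hn.
        rewrite (sum_n_m_ext _ (fun k => mult s (u lam k / INR (S k)))).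
        2:{ intros k. unfold v, mult; simpl. unfold Rdiv; ring. }
        rewrite sum_n_m_mult_l. unfold mult; simpl. rewrite Rabs_mult.
        replace (Rabs s) with 1 by (unfold s; destruct Rle_dec; rewrite ?Rabs_R1, ?Rabs_m1; auto).
        rewrite Rmult_1_l. auto.
      - intros j k Hjk. pose proof (Hmon (j - K) (k - j))%nat as Hm.
        replace (K + (j - K) + (k - j))%nat with k in Hm by lia.
        replace (K + (j - K))%nat with j in Hm by lia. exact Hm.
      - intros k Hk. replace k with (K + (k - K))%nat by lia. apply Hpos. }
    apply is_lim_seq_ext with (fun m => s * v m).
    { intros m. unfold v. rewrite <- Rmult_assoc, Hs. ring. }
    replace (Finite 0) with (Rbar_mult s 0) by (simpl; f_equal; ring).
    apply is_lim_seq_scal_l. auto.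
Qed.

Lemma A_u lam m : A lam m = u lam m * INR (S m).
Proof. unfold u. assert (INR (S m) <> 0) by (apply not_0_INR; lia). field; auto. Qed.

Lemma base lam : lam <> 0 -> ex_series (dzeta_term lam 2) ->
  is_series (fun m => dcoef lam (S m) / (INR (S m) ^ 1 * INR (S (S m)))) (1 / (lam + 1)).
Proof.
  intros Hl Hex. destruct (u_lim lam Hl Hex) as [Hgt Hlim].
  assert (Hps : forall n, sum_n (fun m => dcoef lam (S m) / (INR (S m) ^ 1 * INR (S (S m)))) n
                          = (1 - u lam (S n)) / (lam + 1)).
  { induction n.
    - rewrite sum_O. rewrite u_S by auto. fold (A lam 0). unfold u. rewrite A0. simpl. field; repeat split; lra.
    - rewrite sum_Sn, IHn. change (plus ?x ?y) with (x + y). rewrite pow_1. fold (A lam (S n)). rewrite A_u.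
      rewrite (u_S lam (S n)) by auto.
      assert (0 < INR (S (S n))) by (apply lt_0_INR; lia).
      rewrite (S_INR (S (S n))). match goal with |- ?a = ?b => change (@eq R a b) end. field; repeat split; lra. }
  unfold is_series. change (is_lim_seq (sum_n (fun m => dcoef lam (S m) / (INR (S m) ^ 1 * INR (S (S m))))) (1 / (lam + 1))).
  apply is_lim_seq_ext with (fun n => (1 - u lam (S n)) / (lam + 1)).
  { intros; rewrite Hps; auto. }
  apply is_lim_seq_ext with (fun n => (1/(lam+1)) * (1 - u lam (S n))).
  { intros; field; lra. }
  replace (Finite (1/(lam+1))) with (Rbar_mult (1/(lam+1)) (1 - 0)) by (simpl; f_equal; ring).
  apply is_lim_seq_scal_l. apply is_lim_seq_minus'. apply is_lim_seq_const.
  apply is_lim_seq_incr_1 in Hlim. exact Hlim.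
Qed.

Ltac toR := match goal with |- ?a = ?b => change (@eq R a b) end.

Definition F lam p k := (-1) ^ (k - 1) * dzeta lam (p - k + 1).

Lemma sumF lam r :
  sum_n_m (F lam (S (S r))) 1 (S r) = dzeta lam (S (S r)) - sum_n_m (F lam (S r)) 1 r.
Proof.
  rewrite sum_Sn_m by lia. change (plus ?x ?y) with (x + y).
  rewrite <- sum_n_m_S.
  rewrite (sum_n_m_ext_loc _ (fun k => - F lam (S r) k)).
  - rewrite sum_opp. unfold F at 1. replace (S (S r) - 1 + 1)%nat with (S (S r)) by lia.
    simpl pow. toR. ring.
  - intros k Hk. unfold F. replace (S (S r) - S k + 1)%nat with (S r - k + 1)%nat by lia.
    replace (S k - 1)%nat with (S (k - 1)) by lia. simpl pow. toR. ring.
Qed.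

Lemma main_ind lam : lam <> 0 -> ex_series (dzeta_term lam 2) -> forall p, (1 <= p)%nat ->
  (forall s : nat, (2 <= s <= p)%nat -> ex_series (dzeta_term lam s)) ->
  is_series
    (fun m : nat => dcoef lam (S m) / (INR (S m) ^ p * INR (S (S m))))
    (sum_n_m (fun k : nat => (-1) ^ (k - 1) * dzeta lam (p - k + 1)) 1 (p - 1)
     + (-1) ^ (p - 1) / (lam + 1)).
Proof.
  intros Hl H2. destruct (u_lim lam Hl H2) as [Hgt _]. induction p as [|q IH]; intros Hp Hs. lia.
  destruct q as [|r].
  - simpl. rewrite sum_n_m_zero by lia. change (@zero R_AbelianMonoid) with 0.
    replace (0 + 1 / (lam + 1)) with (1 / (lam + 1)) by ring. apply base; auto.
  - assert (IH' := IH ltac:(lia) (fun s Hs' => Hs s ltac:(lia))).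
    assert (Hz : is_series (dzeta_term lam (S (S r))) (dzeta lam (S (S r)))).
    { apply Series_correct. apply Hs. lia. }
    assert (H := is_series_minus _ _ _ _ Hz IH').
    replace (S (S r) - 1)%nat with (S r) by lia.
    replace (S r - 1)%nat with r in H by lia.
    change (sum_n_m (fun k : nat => (-1) ^ (k - 1) * dzeta lam (S (S r) - k + 1)) 1 (S r))
      with (sum_n_m (F lam (S (S r))) 1 (S r)).
    change (sum_n_m (fun k : nat => (-1) ^ (k - 1) * dzeta lam (S r - k + 1)) 1 r)
      with (sum_n_m (F lam (S r)) 1 r) in H.
    rewrite sumF.
    change (plus ?x (opp ?y)) with (x - y) in H.
    replace (dzeta lam (S (S r)) - sum_n_m (F lam (S r)) 1 r + (-1) ^ S r / (lam + 1))
      with (dzeta lam (S (S r)) - (sum_n_m (F lam (S r)) 1 r + (-1) ^ r / (lam + 1)))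
      by (simpl pow; field; lra).
    apply is_series_ext with (2 := H).
    intros m. change (plus ?x (opp ?y)) with (x - y). unfold dzeta_term.
    assert (0 < INR (S m)) by (apply lt_0_INR; lia).
    assert (0 < INR (S (S m))) by (apply lt_0_INR; lia).
    assert (INR (S m) ^ S r <> 0) by (apply pow_nonzero; lra).
    change (INR (S m) ^ S (S r)) with (INR (S m) * INR (S m) ^ S r).
    rewrite (S_INR (S m)) in *. toR. field. repeat split; lra.
Qed.

Theorem theorem3 (lam : R) (p : nat) :
  lam <> 0 ->
  (2 <= p)%nat ->
  (forall s : nat, (2 <= s <= p)%nat -> ex_series (dzeta_term lam s)) ->
  is_series
    (fun m : nat => dcoef lam (S m) / (INR (S m) ^ p * INR (S (S m))))
    (sum_n_m (fun k : nat => (-1) ^ (k - 1) * dzeta lam (p - k + 1)) 1 (p - 1)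
     + (-1) ^ (p - 1) / (lam + 1)).
Proof.
  intros Hl Hp Hs. apply main_ind; auto; try lia.
Qed.
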